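(* Let $M$ be a complete non-ambiguous matrix (CNM) of size $n\ge 1$ and let $\pi(M)\in S_n$ be its associated permutation. Then $\det(M)=\operatorname{sgn}(\pi(M))$.
   Context: A complete non-ambiguous matrix (CNM) of size $n$ is an $n\times n$ matrix $M=(m_{i,j})$ with entries in $\{0,1\}$ whose support $T=\{(i,j): m_{i,j}=1\}$ (whose elements are called vertices) satisfies: (1) $(1,1)\in T$ (the root); (2) for every $p=(i,j)\in T$ with $p\neq(1,1)$, exactly one of the following holds: there is $(i',j)\in T$ with $i'<i$, or there is $(i,j')\in T$ with $j'<j$; (3) every row and every column of $M$ contains at least one vertex; (4) completeness: define the parent of $p=(i,j)\neq(1,1)$ to be $(i',j)$ with $i'<i$ maximal if such a vertex exists, and otherwise $(i,j')$ with $j'<j$ maximal; then every vertex is the parent of either zero or exactly two vertices. A vertex with no children is a leaf. (CNMs are exactly the matrix encodings of complete non-ambiguous trees.) Each row and each column of a CNM contains exactly one leaf, so the leaf matrix $p(M)$, obtained from $M$ by replacing all non-leaf vertices by $0$, is a permutation matrix; the associated permutation $\pi(M)\in S_n$ is the permutation with $\pi(M)(i)=j$ iff $(i,j)$ is a leaf. $\operatorname{sgn}$ denotes the sign of a permutation. *)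

(* Defs.v *)
(* Indices are 0-based: row/column 1 of the paper is index 0. *)
From mathcomp Require Import all_boot all_order all_algebra all_fingroup.
Set Implicit Arguments. Unset Strict Implicit. Unset Printing Implicit Defensive.
Import GRing.Theory Num.Theory.
Local Open Scope ring_scope.

Section CNM.
Variable n : nat.
Implicit Types (M : 'M[int]_n) (p q : 'I_n * 'I_n).

Definition vx M p : bool := M p.1 p.2 == 1.

Definition is_root p : bool := (val p.1 == 0%N) && (val p.2 == 0%N).

Definition has_above M p : bool :=
  [exists i' : 'I_n, (i' < p.1)%N && vx M (i', p.2)].

Definition has_left M p : bool :=
  [exists j' : 'I_n, (j' < p.2)%N && vx M (p.1, j')].

Definition parent_of M p q : bool :=
  [&& vx M p, ~~ is_root p, vx M q &
   if has_above M p then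
     [&& q.2 == p.2, (q.1 < p.1)%N &
         [forall k : 'I_n, ((q.1 < k)%N && (k < p.1)%N) ==> ~~ vx M (k, p.2)]]
   else
     [&& q.1 == p.1, (q.2 < p.2)%N &
         [forall k : 'I_n, ((q.2 < k)%N && (k < p.2)%N) ==> ~~ vx M (p.1, k)]]].

Definition children M q : {set 'I_n * 'I_n} := [set p | parent_of M p q].

Definition is_leaf M p : bool := vx M p && (#|children M p| == 0%N).
End CNM.

Section CNM2.
Variable n : nat.
Definition is_CNM (M : 'M[int]_n) : Prop :=
  [/\
      (forall i j, M i j = 0 \/ M i j = 1),
      (forall p, is_root p -> vx M p),
      (forall p, vx M p -> ~~ is_root p -> has_above M p (+) has_left M p),
      (forall i : 'I_n, exists j, vx M (i, j)) /\ (forall j : 'I_n, exists i, vx M (i, j)) &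
      (forall q, vx M q -> #|children M q| = 0%N \/ #|children M q| = 2%N)].
End CNM2.

(* Main.v *)
Require Import Defs.
From mathcomp Require Import all_boot all_order all_algebra all_fingroup.
Import GRing.Theory Num.Theory.
Local Open Scope ring_scope.

Lemma perm_le_eq (n : nat) (s pi : 'S_n) :
  (forall i, (s i <= pi i)%N) -> s = pi.
Proof.
move=> H; apply/permP => i; apply/val_inj/eqP; rewrite eqn_leq H /=.
rewrite leqNgt; apply/negP => Hlt.
have Es : (\sum_(k : 'I_n) (s k : nat) = \sum_(k : 'I_n) (k : nat))%N.
  by rewrite [RHS](reindex_inj (@perm_inj _ s)).
have Ep : (\sum_(k : 'I_n) (pi k : nat) = \sum_(k : 'I_n) (k : nat))%N.
  by rewrite [RHS](reindex_inj (@perm_inj _ pi)).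
have : (\sum_(k : 'I_n) (s k : nat) < \sum_(k : 'I_n) (pi k : nat))%N.
  rewrite (bigD1 i) //= [X in (_ < X)%N](bigD1 i) //=.
  by rewrite -addSn leq_add // leq_sum.
by rewrite Es Ep ltnn.
Qed.

Lemma vx_le (n : nat) (M : 'M[int]_n) (pi : 'S_n) :
  is_CNM M -> (forall i : 'I_n, is_leaf M (i, pi i)) ->
  forall i j, vx M (i, j) -> (j <= pi i)%N.
Proof.
case=> H01 Hroot Hxor Hrc Hcompl Hleaf i j Hv.
rewrite leqNgt; apply/negP => Hlt.
pose P := fun k : 'I_n => (pi i < k)%N && vx M (i, k).
have Pj : P j by rewrite /P Hlt Hv.
case: (arg_minnP (fun k : 'I_n => (k : nat)) Pj) => k /andP [Hk Hvk] Hmin.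
have Hl := Hleaf i; move: (Hl) => /andP [Hvl /eqP Hc].
have Hleft : has_left M (i, k) by apply/existsP; exists (pi i); rewrite Hk Hvl.
have Hnr : ~~ is_root (i, k).
  rewrite /is_root /= negb_and; apply/orP; right.
  by rewrite -lt0n (leq_ltn_trans _ Hk).
have Habove : has_above M (i, k) = false.
  by move: (Hxor _ Hvk Hnr); rewrite Hleft addbT => /negbTE.
have Hpar : parent_of M (i, k) (i, pi i).
  rewrite /parent_of Hvk Hnr Hvl Habove /= eqxx Hk /=.
  apply/forallP => k'; apply/implyP => /andP [H1 H2].
  apply/negP => Hv'.
  have := Hmin k' (introT andP (conj H1 Hv')).
  by rewrite leqNgt H2.
have : (i, k) \in children M (i, pi i) by rewrite inE.
move=> Hin.
have : (0 < #|children M (i, pi i)|)%N by apply/card_gt0P; exists (i, k).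
by rewrite Hc.
Qed.

Theorem proposition2p1 (n : nat) (M : 'M[int]_n) (pi : 'S_n) :
  (0 < n)%N -> is_CNM M -> (forall i : 'I_n, is_leaf M (i, pi i)) ->
  \det M = (-1) ^+ pi.
Proof.
move=> _ HC Hleaf.
have Hle := @vx_le _ _ _ HC Hleaf.
have H01 : forall i j, M i j = 0 \/ M i j = 1 by case: HC.
rewrite /determinant (bigD1 pi) //= [X in _ + X]big1.
  rewrite addr0 big1 ?mulr1 // => i _.
  by have /andP [/eqP -> _] := Hleaf i.
move=> s Hs.
case: (boolP [exists i, M i (s i) != 1]).
  case/existsP => i Hi.
  rewrite (bigD1 i) //=.
  by case: (H01 i (s i)) => E; [rewrite E mul0r mulr0 | move: Hi; rewrite E eqxx].
rewrite negb_exists => /forallP Hall.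
exfalso; move/eqP: Hs; apply.
apply: perm_le_eq => i; apply: Hle.
by rewrite /vx /=; move: (Hall i); rewrite negbK.
Qed.
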